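(* Let $q$ be a prime power and $\mathbb F_q$ the field with $q$ elements. For $z\in\mathbb F_q$ let $v_z=(1,z,z^2,z^3)\in\mathbb F_q^4$, and let $\mathcal L_z=\{\{x+yv_z: y\in\mathbb F_q\}: x\in\mathbb F_q^4\}$ be the set of lines in direction $v_z$. Let $G=G(q)$ be the bipartite graph with parts $P=\mathbb F_q^4$ and $L=\bigcup_{z\in\mathbb F_q}\mathcal L_z$, where a point $p\in P$ is adjacent to a line $\ell\in L$ if and only if $p\in\ell$. Suppose $p_1\ell_1p_2\ell_2p_3\ell_3p_4\ell_4p_1$ is a cycle of length $8$ in $G$ (so $p_1,\dots,p_4\in P$ and $\ell_1,\dots,\ell_4\in L$ are eight distinct vertices, with $p_1,p_2\in\ell_1$, $p_2,p_3\in\ell_2$, $p_3,p_4\in\ell_3$, $p_4,p_1\in\ell_4$), and let $v_1,v_2,v_3,v_4$ be the directions of $\ell_1,\ell_2,\ell_3,\ell_4$ respectively (i.e. $v_i=v_{z}$ where $\ell_i\in\mathcal L_{z}$). Then $v_1=v_3$, $v_2=v_4$, and $v_1\neq v_2$. *)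

(* Defs.v *)
From HB Require Import structures.
From mathcomp Require Import all_boot all_order all_algebra all_field.
Set Implicit Arguments. Unset Strict Implicit. Unset Printing Implicit Defensive.
Import GRing.Theory.
Local Open Scope ring_scope.

Definition vdir (F : fieldType) (z : F) : 'rV[F]_4 := \row_(i < 4) z ^+ i.

Definition line_of (F : finFieldType) (x : 'rV[F]_4) (z : F) : {set 'rV[F]_4} :=
  [set x + y *: vdir z | y : F].

Definition in_Lz (F : finFieldType) (z : F) (l : {set 'rV[F]_4}) : Prop :=
  exists x : 'rV[F]_4, l = line_of x z.

(* Main.v *)
Require Import Defs.
From HB Require Import structures.
From mathcomp Require Import all_boot all_order all_algebra all_field.
From mathcomp Require Import ring.
Local Open Scope ring_scope.
Import GRing.Theory.

Lemma cyc (R : comRingType) (a1 a2 a3 a4 z1 z2 z3 z4 : R) :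
  (forall k : 'I_4, a1 * z1 ^+ k + a2 * z2 ^+ k + a3 * z3 ^+ k + a4 * z4 ^+ k = 0) ->
  a1 * ((z1 - z2) * (z1 - z3) * (z1 - z4)) = 0.
Proof.
move=> H.
have E0 := H (@Ordinal 4 0 isT); have E1 := H (@Ordinal 4 1 isT).
have E2 := H (@Ordinal 4 2 isT); have E3 := H (@Ordinal 4 3 isT).
move: E0 E1 E2 E3 => /= E0 E1 E2 E3.
have -> : a1 * ((z1 - z2) * (z1 - z3) * (z1 - z4)) =
  (a1 * z1 ^+ 3 + a2 * z2 ^+ 3 + a3 * z3 ^+ 3 + a4 * z4 ^+ 3)
  - (z2 + z3 + z4) * (a1 * z1 ^+ 2 + a2 * z2 ^+ 2 + a3 * z3 ^+ 2 + a4 * z4 ^+ 2)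
  + (z2 * z3 + z2 * z4 + z3 * z4) * (a1 * z1 ^+ 1 + a2 * z2 ^+ 1 + a3 * z3 ^+ 1 + a4 * z4 ^+ 1)
  - z2 * z3 * z4 * (a1 * z1 ^+ 0 + a2 * z2 ^+ 0 + a3 * z3 ^+ 0 + a4 * z4 ^+ 0).
  by ring.
by rewrite E0 E1 E2 E3; ring.
Qed.

Lemma line_shift (F : finFieldType) (x p : 'rV[F]_4) z :
  p \in line_of x z -> line_of x z = line_of p z.
Proof.
case/imsetP => y _ ->; apply/setP => u.
apply/imsetP/imsetP => [[t _ ->]|[t _ ->]].
  exists (t - y) => //; rewrite -addrA -scalerDl; congr (_ + _ *: _).
  by rewrite addrC subrK.
by exists (y + t) => //; rewrite scalerDl addrA.
Qed.

Lemma vdir_inj (F : fieldType) (a b : F) : vdir a = vdir b -> a = b.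
Proof.
by move/(congr1 (fun M : 'rV[F]_4 => M 0 (@Ordinal 4 1 isT))); rewrite !mxE /= !expr1.
Qed.

Theorem lemma4p2 (q : nat) (F : finFieldType) (hq : #|F| = q)
    (p1 p2 p3 p4 : 'rV[F]_4) (l1 l2 l3 l4 : {set 'rV[F]_4})
    (z1 z2 z3 z4 : F) :
  in_Lz z1 l1 -> in_Lz z2 l2 -> in_Lz z3 l3 -> in_Lz z4 l4 ->
  uniq [:: p1; p2; p3; p4] -> uniq [:: l1; l2; l3; l4] ->
  p1 \in l1 -> p2 \in l1 -> p2 \in l2 -> p3 \in l2 ->
  p3 \in l3 -> p4 \in l3 -> p4 \in l4 -> p1 \in l4 ->
  vdir z1 = vdir z3 /\ vdir z2 = vdir z4 /\ vdir z1 <> vdir z2.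
Proof.
move=> [x1 ->] [x2 ->] [x3 ->] [x4 ->] up ul.
move=> h11 h21 h22 h32 h33 h43 h44 h14.
have nz : forall (x x' p : 'rV[F]_4) z z', p \in line_of x z -> p \in line_of x' z' ->
    line_of x z != line_of x' z' -> z != z'.
  move=> x x' p z z' hp hp' hne; apply/eqP => ez; subst z'.
  by move: hne; rewrite (@line_shift _ _ _ _ hp) (@line_shift _ _ _ _ hp') eqxx.
move: ul; rewrite /= !inE !negb_or => /and4P[/and3P[n12 n13 n14] /andP[n23 n24] n34 _].
move: up; rewrite /= !inE !negb_or => /and4P[/and3P[m12 m13 m14] /andP[m23 m24] m34 _].
have d12 := nz _ _ _ _ _ h21 h22 n12.
have d23 := nz _ _ _ _ _ h32 h33 n23.
have d34 := nz _ _ _ _ _ h43 h44 n34.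
have d41 : z4 != z1 by apply: (nz _ _ _ _ _ h14 h11); rewrite eq_sym.
case/imsetP: h11 => s1 _ e11; case/imsetP: h21 => t1 _ e21.
case/imsetP: h22 => s2 _ e22; case/imsetP: h32 => t2 _ e32.
case/imsetP: h33 => s3 _ e33; case/imsetP: h43 => t3 _ e43.
case/imsetP: h44 => s4 _ e44; case/imsetP: h14 => t4 _ e14.
have a1nz : t1 - s1 != 0.
  by rewrite subr_eq0; apply: contraNneq m12 => e; rewrite e11 e21 e.
have a2nz : t2 - s2 != 0.
  by rewrite subr_eq0; apply: contraNneq m23 => e; rewrite e22 e32 e.
have H : forall k : 'I_4, (t1 - s1) * z1 ^+ k + (t2 - s2) * z2 ^+ k
    + (t3 - s3) * z3 ^+ k + (t4 - s4) * z4 ^+ k = 0.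
  move=> k.
  have c := fun (p x : 'rV[F]_4) s z (e : p = x + s *: vdir z) =>
    congr1 (fun M : 'rV[F]_4 => M 0 k) e.
  move: (c _ _ _ _ e11) (c _ _ _ _ e21) (c _ _ _ _ e22) (c _ _ _ _ e32)
        (c _ _ _ _ e33) (c _ _ _ _ e43) (c _ _ _ _ e44) (c _ _ _ _ e14).
  rewrite /= !mxE => f1 f2 f3 f4 f5 f6 f7 f8.
  move: f1 f2 f3 f4 f5 f6 f7 f8.
  move: (z1 ^+ k) (z2 ^+ k) (z3 ^+ k) (z4 ^+ k) => w1 w2 w3 w4.
  move: (x1 0 k) (x2 0 k) (x3 0 k) (x4 0 k) => y1 y2 y3 y4.
  move: (p1 0 k) (p2 0 k) (p3 0 k) (p4 0 k) => P1 P2 P3 P4.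
  move=> e1 e2 e3 e4 e5 e6 e7 e8.
  have g1 : P1 - (y1 + s1 * w1) = 0 by rewrite e1 subrr.
  have g2 : P2 - (y1 + t1 * w1) = 0 by rewrite e2 subrr.
  have g3 : P2 - (y2 + s2 * w2) = 0 by rewrite e3 subrr.
  have g4 : P3 - (y2 + t2 * w2) = 0 by rewrite e4 subrr.
  have g5 : P3 - (y3 + s3 * w3) = 0 by rewrite e5 subrr.
  have g6 : P4 - (y3 + t3 * w3) = 0 by rewrite e6 subrr.
  have g7 : P4 - (y4 + s4 * w4) = 0 by rewrite e7 subrr.
  have g8 : P1 - (y4 + t4 * w4) = 0 by rewrite e8 subrr.
  have -> : (t1 - s1) * w1 + (t2 - s2) * w2 + (t3 - s3) * w3 + (t4 - s4) * w4 =
    (P1 - (y1 + s1 * w1)) - (P2 - (y1 + t1 * w1)) + (P2 - (y2 + s2 * w2))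
    - (P3 - (y2 + t2 * w2)) + (P3 - (y3 + s3 * w3)) - (P4 - (y3 + t3 * w3))
    + (P4 - (y4 + s4 * w4)) - (P1 - (y4 + t4 * w4)) by ring.
  by rewrite g1 g2 g3 g4 g5 g6 g7 g8; ring.
have C1 := @cyc _ _ _ _ _ _ _ _ _ H.
have C2 : (t2 - s2) * ((z2 - z3) * (z2 - z4) * (z2 - z1)) = 0.
  apply: (@cyc _) => k; rewrite addrC !addrA; exact: H k.
have e13 : z1 = z3.
  apply/eqP; apply: contraT => n13'.
  by move/eqP: C1; rewrite !mulf_eq0 (negbTE a1nz) !subr_eq0 (negbTE d12) (negbTE n13')
    eq_sym (negbTE d41).
have e24 : z2 = z4.
  apply/eqP; apply: contraT => n24'.
  by move/eqP: C2; rewrite !mulf_eq0 (negbTE a2nz) !subr_eq0 (negbTE d23) (negbTE n24')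
    eq_sym (negbTE d12).
split; first by rewrite e13.
split; first by rewrite e24.
by move/vdir_inj => e; rewrite e eqxx in d12.
Qed.
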